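(* Let $P$ be a protocol for anonymous transmissions (achieving sender anonymity) among $n$ players in which the only resources available are pairwise shared secret key bits, a reliable broadcast channel and public communication. Then every node of the key-sharing graph $G=(V,E)$ of $P$ has degree at least $2$ (otherwise the anonymity of a player of degree $1$ can be broken by his unique neighbour).
   Context: The key-sharing graph of the protocol is the undirected graph $G=(V,E)$ whose nodes are the players, with an edge between nodes $i$ and $j$ iff $i$ and $j$ share one bit of secret key. Sender anonymity: for an adversary corrupting a set of $t\le n-2$ players not including the sender $s$ and observing all communication $C$ and the randomness $G^t$ of the corrupted players, $\max_S\Pr[S=s\mid G^t,C]=\max_S\Pr[S=s]=1/(n-t)$, maximum over random variables $S$ depending only on $C$ and $G^t$. *)

(* Defs.v *)
From mathcomp Require Import all_boot all_order all_algebra.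
Set Implicit Arguments. Unset Strict Implicit. Unset Printing Implicit Defensive.
Import Order.TTheory GRing.Theory Num.Theory.
Local Open Scope ring_scope.

Section Protocol.
Variables (n : nat) (M Rnd B : finType).

(* A sample of keys: one uniformly random bit for every ordered pair; the key
   shared by i and j is the bit of the pair (min, max).  Only the bits of
   edges of the key-sharing graph are ever given to a player. *)
Definition keys := {ffun 'I_n * 'I_n -> bool}.
Definition pair_key (K : keys) (i j : 'I_n) : bool :=
  if (i <= j)%N then K (i, j) else K (j, i).

Definition key_vec (E : rel 'I_n) (K : keys) (i : 'I_n) : {ffun 'I_n -> bool} :=
  [ffun j => if E i j then pair_key K i j else false].

Definition round := {ffun 'I_n -> B}.

(* Next-message function: player i, its input (Some m iff it is the sender
   with message m), its private randomness, its key bits, and the public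
   transcript so far. *)
Definition actT := 'I_n -> option M -> Rnd -> {ffun 'I_n -> bool} -> seq round -> B.
Definition outT := 'I_n -> option M -> Rnd -> {ffun 'I_n -> bool} -> seq round -> M.

Definition input (s : 'I_n) (m : M) (j : 'I_n) : option M :=
  if j == s then Some m else None.

Fixpoint transcript (E : rel 'I_n) (act : actT) (inp : 'I_n -> option M)
  (K : keys) (rs : {ffun 'I_n -> Rnd}) (k : nat) : seq round :=
  match k with
  | 0 => [::]
  | k'.+1 => let h := transcript E act inp K rs k' in
             rcons h [ffun i => act i (inp i) (rs i) (key_vec E K i) h]
  end.

Variable R : realFieldType.

Definition weight (rho : 'I_n -> Rnd -> R) (K : keys) (rs : {ffun 'I_n -> Rnd}) : R :=
  (#|{: keys}|%:R)^-1 * \prod_(i < n) rho i (rs i).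

Definition is_distr (rho : 'I_n -> Rnd -> R) : Prop :=
  forall i, (forall r, 0 <= rho i r) /\ \sum_(r : Rnd) rho i r = 1.

(* View of an adversary corrupting the set A: the whole public communication
   C together with the randomness G^t (private coins and key bits) of the
   corrupted players. *)
Definition viewT := (seq round * {ffun 'I_n -> option Rnd}
                     * {ffun 'I_n -> option {ffun 'I_n -> bool}})%type.

Definition view (E : rel 'I_n) (act : actT) (T : nat) (A : {set 'I_n})
  (inp : 'I_n -> option M) (K : keys) (rs : {ffun 'I_n -> Rnd}) : viewT :=
  (transcript E act inp K rs T,
   [ffun a => if a \in A then Some (rs a) else None],
   [ffun a => if a \in A then Some (key_vec E K a) else None]).

(* Pr[S = s] where S = g(C, G^t) is the adversary's guess and the sender s is
   uniformly distributed over the n - t honest players, sending message m. *)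
Definition guess_prob (E : rel 'I_n) (act : actT) (T : nat)
  (rho : 'I_n -> Rnd -> R) (A : {set 'I_n}) (m : M) (g : viewT -> 'I_n) : R :=
  \sum_(s in ~: A) (#|~: A|%:R)^-1 *
    \sum_(K : keys) \sum_(rs : {ffun 'I_n -> Rnd})
      weight rho K rs * (g (view E act T A (input s m) K rs) == s)%:R.

(* Sender anonymity against every set of t <= n - 2 corrupted players:
   max_S Pr[S = s | G^t, C] = 1/(n - t). *)
Definition sender_anonymous (E : rel 'I_n) (act : actT) (T : nat)
  (rho : 'I_n -> Rnd -> R) : Prop :=
  forall (A : {set 'I_n}) (m : M), (#|A| <= n - 2)%N ->
    (forall g, guess_prob E act T rho A m g <= (#|~: A|%:R)^-1) /\
    (exists g, guess_prob E act T rho A m g = (#|~: A|%:R)^-1).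

Definition transmits (E : rel 'I_n) (act : actT) (out : outT) (T : nat)
  (rho : 'I_n -> Rnd -> R) : Prop :=
  forall (s : 'I_n) (m : M) (K : keys) (rs : {ffun 'I_n -> Rnd}),
    (forall i, 0 < rho i (rs i)) ->
    forall j, out j (input s m j) (rs j) (key_vec E K j)
                  (transcript E act (input s m) K rs T) = m.

Definition degree (E : rel 'I_n) (i : 'I_n) : nat := #|[set j | E i j]|.

End Protocol.

(* Main.v *)
Require Import Defs.
From mathcomp Require Import all_boot all_order all_algebra.
From mathcomp Require Import ring lra zify.
Set Implicit Arguments. Unset Strict Implicit. Unset Printing Implicit Defensive.
Import Order.TTheory GRing.Theory Num.Theory.
Local Open Scope ring_scope.


Lemma tr_mix (n : nat) (M Rnd B : finType) (E : rel 'I_n) (act : actT n M Rnd B)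
  (iX iY iZ : 'I_n -> option M) (KX KY KZ : keys n) (rX rY rZ : {ffun 'I_n -> Rnd}) (r : nat) :
  (forall j, (iZ j, rZ j, key_vec E KZ j) = (iX j, rX j, key_vec E KX j) \/
             (iZ j, rZ j, key_vec E KZ j) = (iY j, rY j, key_vec E KY j)) ->
  transcript E act iX KX rX r = transcript E act iY KY rY r ->
  transcript E act iZ KZ rZ r = transcript E act iX KX rX r.
Proof.
move=> H; elim: r => [//|r IH] /=.
move=> /rcons_inj [eh er]; rewrite IH //; congr rcons.
apply/ffunP => j; rewrite !ffunE.
case: (H j) => [[-> -> ->] //|[-> -> ->]].
have := congr1 (fun f : round n B => f j) er; rewrite !ffunE => ->.
by rewrite eh.
Qed.

Lemma pair_keyC (n : nat) (K : keys n) (i j : 'I_n) : pair_key K i j = pair_key K j i.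
Proof.
rewrite /pair_key; case: (ltngtP i j) => h.
- by [].
- by [].
- by have -> : i = j by apply: val_inj.
Qed.

Lemma kv_eq (n : nat) (E : rel 'I_n) (K1 K2 : keys n) (i k : 'I_n) :
  symmetric E -> irreflexive E -> ~~ E i k ->
  (forall a, a != i -> a != k -> key_vec E K1 a = key_vec E K2 a) ->
  key_vec E K1 k = key_vec E K2 k.
Proof.
move=> sE iE nik H; apply/ffunP => j; rewrite !ffunE.
case Ekj: (E k j) => //.
have jk : j != k by apply/eqP => ejk; rewrite ejk iE in Ekj.
have ji : j != i by apply/eqP => eji; rewrite eji sE in Ekj; rewrite Ekj in nik.
have := congr1 (fun f : {ffun 'I_n -> bool} => f k) (H j ji jk); rewrite !ffunE sE Ekj.
by rewrite (pair_keyC K1) (pair_keyC K2).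
Qed.

Lemma sum_pos_ex (R : realFieldType) (I : finType) (F : I -> R) :
  0 < \sum_i F i -> exists i, 0 < F i.
Proof.
move=> h; case: (boolP [exists i, 0 < F i]) => [/existsP //|/existsPn hn].
have : \sum_i F i <= 0 by apply: sumr_le0 => i _; rewrite leNgt hn.
by rewrite leNgt h.
Qed.

Lemma seq_pos_ex (R : realFieldType) (I : eqType) (r : seq I) (F : I -> R) :
  0 < \sum_(i <- r) F i -> exists2 i, i \in r & 0 < F i.
Proof.
move=> h; case: (boolP (has (fun i => 0 < F i) r)) => [/hasP //|/hasPn hn].
have : \sum_(i <- r) F i <= 0.
  rewrite big_seq_cond; apply: sumr_le0 => i /andP [ir _]; rewrite leNgt; exact: hn.
by rewrite leNgt h.
Qed.

Lemma mass (R : realFieldType) (X Y : finType) (V : eqType) (w : X -> Y -> R)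
  (f : X -> Y -> V) (Vs : seq V) (h : V -> R) :
  uniq Vs -> (forall x y, f x y \in Vs) ->
  \sum_(v <- Vs) (\sum_x \sum_y w x y * (f x y == v)%:R) * h v =
  \sum_x \sum_y w x y * h (f x y).
Proof.
move=> uV cV.
under eq_bigr => v _ do rewrite big_distrl /=.
rewrite exchange_big /=; apply: eq_bigr => x _.
under eq_bigr => v _ do rewrite big_distrl /=.
rewrite exchange_big /=; apply: eq_bigr => y _.
rewrite (bigD1_seq (f x y)) //= eqxx mulr1 big1 ?addr0 // => v /negbTE nv.
by rewrite eq_sym nv mulr0 mul0r.
Qed.

Lemma amgm (R : realFieldType) (V : eqType) (Vs : seq V) (x a b : V -> R) :
  (forall v, 0 <= x v) -> (forall v, 0 <= a v) -> (forall v, 0 <= b v) ->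
  \sum_(v <- Vs) x v = 1 -> \sum_(v <- Vs) a v = 1 -> \sum_(v <- Vs) b v = 1 ->
  (forall v, v \in Vs -> x v * x v <= a v * b v) ->
  forall v, v \in Vs -> x v = b v.
Proof.
move=> x0 a0 b0 sx sa sb hx.
have le2 : forall v, v \in Vs -> 0 <= a v + b v - 2 * x v.
  move=> v vV; rewrite subr_ge0 leNgt; apply/negP => hlt.
  have h1 : (a v + b v) * (a v + b v) < (2 * x v) * (2 * x v).
    by apply: ltr_pM => //; rewrite addr_ge0.
  have := hx v vV; have := sqr_ge0 (a v - b v); rewrite expr2; nra.
have s0 : \sum_(v <- Vs) (a v + b v - 2 * x v) = 0.
  rewrite !big_split /= sa sb sumrN -mulr_sumr sx; lra.
move/eqP: s0; rewrite big_seq psumr_eq0; last by move=> v vV; exact: le2.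
move/allP => hall v vV; have := hall v vV; rewrite vV /= => /eqP e.
have ea : a v = 2 * x v - b v by lra.
have h : (x v - b v) * (x v - b v) <= 0.
  have := hx v vV; rewrite ea => hh.
  have -> : (x v - b v) * (x v - b v) = x v * x v - (2 * x v - b v) * b v by ring.
  by rewrite subr_le0.
have : (x v - b v) * (x v - b v) = 0.
  by apply/le_anti; rewrite h /= -expr2 sqr_ge0.
by move/eqP; rewrite mulf_eq0 orbb subr_eq0 => /eqP.
Qed.

Lemma le_sum_eq (R : realFieldType) (V : eqType) (Vs : seq V) (x y t : V -> R) :
  \sum_(v <- Vs) x v = 1 -> \sum_(v <- Vs) y v = 1 -> \sum_(v <- Vs) t v <= 1 ->
  (forall v, x v <= t v) -> (forall v, y v <= t v) ->
  forall v, v \in Vs -> x v = y v.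
Proof.
move=> sx sy st hx hy.
have key : forall z : V -> R, \sum_(v <- Vs) z v = 1 -> (forall v, z v <= t v) ->
    forall v, v \in Vs -> t v = z v.
  move=> z sz hz.
  have s0 : \sum_(v <- Vs) (t v - z v) = 0.
    apply/le_anti; rewrite sumr_ge0 ?andbT; last by move=> v _; rewrite subr_ge0.
    by rewrite sumrB sz subr_le0.
  move/eqP: s0; rewrite psumr_eq0; last by move=> v _; rewrite subr_ge0.
  by move/allP => hall v vV; have := hall v vV; rewrite /= subr_eq0 => /eqP.
by move=> v vV; rewrite -(key x) // (key y).
Qed.


Definition upd (n : nat) (Rnd : finType) (rs : {ffun 'I_n -> Rnd}) (k : 'I_n) (x : Rnd) :
  {ffun 'I_n -> Rnd} := [ffun j => if j == k then x else rs j].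

Lemma core (n : nat) (M Rnd B : finType) (E : rel 'I_n) (act : actT n M Rnd B) (T : nat)
  (i k : 'I_n) (m : M) (K1 K2 : keys n) (rs1 rs2 : {ffun 'I_n -> Rnd}) v :
  symmetric E -> irreflexive E -> ~~ E i k -> i != k ->
  view E act T (~: [set i; k]) (input i m) K1 (upd rs1 k (rs2 k)) = v ->
  view E act T (~: [set i; k]) (input k m) K2 (upd rs2 k (rs1 k)) = v ->
  view E act T (~: [set i; k]) (fun j => if (j == i) || (j == k) then Some m else None) K1 rs1 = v /\
  view E act T (~: [set i; k]) (fun _ => None) K2 rs2 = v.
Proof.
move=> sE iE nik ik h1 h2; rewrite -h1 in h2 *; case: h2 => ht hr hk.
have kvA : forall a, a != i -> a != k -> key_vec E K1 a = key_vec E K2 a.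
  move=> a ai ak; have := congr1 (fun f : {ffun 'I_n -> option {ffun 'I_n -> bool}} => f a) hk.
  rewrite !ffunE !inE negb_or ai ak /= => -[->] //.
have kvk := kv_eq sE iE nik kvA.
have rsA : forall rs x, [ffun a => if a \in ~: [set i; k] then Some (upd rs k x a) else None]
                 = [ffun a => if a \in ~: [set i; k] then Some (rs a) else None] :> {ffun 'I_n -> option Rnd}.
  move=> rs x; apply/ffunP => a; rewrite !ffunE !inE negb_or.
  by case: eqP => //= _; case: eqP => //= ak; rewrite ffunE (introF eqP ak).
split.
- rewrite /view -(rsA rs1 (rs2 k)); congr (_, _, _).
  apply: (tr_mix (iY := input k m) (KY := K2) (rY := upd rs2 k (rs1 k))); last by rewrite ht.
  move=> j; case: (eqVneq j k) => [->|jk].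
  + right; rewrite /input /upd ffunE !eqxx orbT kvk; done.
  + left; rewrite /input /upd ffunE (negbTE jk) orbF; done.
- rewrite /view -(rsA rs2 (rs1 k)) -hr -hk; congr (_, _, _).
  rewrite -ht; apply: (tr_mix (iY := input i m) (KY := K1) (rY := upd rs1 k (rs2 k))); first last.
    by rewrite ht.
  move=> j; case: (eqVneq j k) => [->|jk].
  + right; rewrite /input /upd ffunE eqxx eq_sym (negbTE ik) kvk; done.
  + left; rewrite /input /upd ffunE (negbTE jk); done.
Qed.


Lemma weight_ge0 (R : realFieldType) (n : nat) (Rnd : finType) (rho : 'I_n -> Rnd -> R) K rs :
  is_distr rho -> 0 <= weight rho K rs.
Proof.
move=> hd; rewrite /weight mulr_ge0 ?invr_ge0 ?ler0n //.
by apply: prodr_ge0 => j _; case: (hd j) => h _; exact: h.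
Qed.

Lemma weight_pos (R : realFieldType) (n : nat) (Rnd : finType) (rho : 'I_n -> Rnd -> R) K rs :
  is_distr rho -> 0 < weight rho K rs -> forall j, 0 < rho j (rs j).
Proof.
move=> hd hw j; rewrite lt0r; case: (hd j) => -> _; rewrite andbT.
apply/eqP => h0; move: hw; rewrite /weight (bigD1 j) //= h0 mul0r mulr0 ltxx.
done.
Qed.

Lemma weight_total (R : realFieldType) (n : nat) (Rnd : finType) (rho : 'I_n -> Rnd -> R) :
  is_distr rho -> \sum_(K : keys n) \sum_(rs : {ffun 'I_n -> Rnd}) weight rho K rs = 1.
Proof.
move=> hd; rewrite /weight.
under eq_bigr => K _ do rewrite -mulr_sumr -bigA_distr_bigA /=.
have -> : \prod_(i < n) \sum_(r : Rnd) rho i r = 1.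
  by apply: big1 => i _; case: (hd i).
rewrite mulr1 sumr_const card_ffun -[X in X = 1]mulr_natr mulVf //.
rewrite pnatr_eq0 -lt0n expn_gt0 card_bool.
done.
Qed.

Definition Qd (R : realFieldType) (n : nat) (M Rnd B : finType) (E : rel 'I_n)
  (act : actT n M Rnd B) (T : nat) (rho : 'I_n -> Rnd -> R) (A : {set 'I_n})
  (inp : 'I_n -> option M) (v : viewT n Rnd B) : R :=
  \sum_(K : keys n) \sum_(rs : {ffun 'I_n -> Rnd}) weight rho K rs * (view E act T A inp K rs == v)%:R.

Lemma prod4 (R : realFieldType) (X Y : finType) (F G : X -> Y -> R) :
  (\sum_x \sum_y F x y) * (\sum_x \sum_y G x y) =
  \sum_x1 \sum_x2 \sum_(p : Y * Y) F x1 p.1 * G x2 p.2.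
Proof.
rewrite big_distrl /=; apply: eq_bigr => x1 _.
rewrite big_distrr /=; apply: eq_bigr => x2 _.
by rewrite big_distrlr /= pair_big.
Qed.

Lemma upd_upd (n : nat) (Rnd : finType) (a b : {ffun 'I_n -> Rnd}) k :
  upd (upd a k (b k)) k (upd b k (a k) k) = a.
Proof. by apply/ffunP => j; rewrite !ffunE eqxx; case: eqP => // ->. Qed.

Lemma prodk (R : realFieldType) (n : nat) (Rnd : finType) (rho : 'I_n -> Rnd -> R)
  (a : {ffun 'I_n -> Rnd}) k :
  \prod_(j < n) rho j (a j) = rho k (a k) * \prod_(j < n | j != k) rho j (a j).
Proof. by rewrite (bigD1 k). Qed.

Lemma weight_swap (R : realFieldType) (n : nat) (Rnd : finType) (rho : 'I_n -> Rnd -> R) K1 K2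
  (rs1 rs2 : {ffun 'I_n -> Rnd}) k :
  weight rho K1 (upd rs1 k (rs2 k)) * weight rho K2 (upd rs2 k (rs1 k)) =
  weight rho K1 rs1 * weight rho K2 rs2.
Proof.
rewrite /weight !(prodk rho _ k) !ffunE !eqxx.
have e : forall (a : {ffun 'I_n -> Rnd}) x,
  \prod_(j < n | j != k) rho j (upd a k x j) = \prod_(j < n | j != k) rho j (a j).
  by move=> a x; apply: eq_bigr => j /negbTE h; rewrite ffunE h.
rewrite !e.
set c := (_^-1); set p1 := \prod_(j < n | j != k) rho j (rs1 j);
  set p2 := \prod_(j < n | j != k) rho j (rs2 j).
ring.
Qed.

Lemma swap_le (R : realFieldType) (n : nat) (M Rnd B : finType) (E : rel 'I_n)
  (act : actT n M Rnd B) (T : nat) (rho : 'I_n -> Rnd -> R) (i k : 'I_n) (m : M) v :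
  is_distr rho -> symmetric E -> irreflexive E -> ~~ E i k -> i != k ->
  Qd E act T rho (~: [set i; k]) (input i m) v * Qd E act T rho (~: [set i; k]) (input k m) v <=
  Qd E act T rho (~: [set i; k]) (fun j => if (j == i) || (j == k) then Some m else None) v *
  Qd E act T rho (~: [set i; k]) (fun _ => None) v.
Proof.
move=> hd sE iE nik ik; rewrite /Qd !prod4.
apply: ler_sum => K1 _; apply: ler_sum => K2 _.
pose sw (p : {ffun 'I_n -> Rnd} * {ffun 'I_n -> Rnd}) := (upd p.1 k (p.2 k), upd p.2 k (p.1 k)).
have swK : involutive sw by case=> a b; rewrite /sw /= !upd_upd.
rewrite (reindex_inj (inv_inj swK)) /=.
apply: ler_sum => -[rs1 rs2] _ /=.
rewrite mulrACA weight_swap [X in _ <= X]mulrACA.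
apply: ler_wpM2l; first by rewrite mulr_ge0 // weight_ge0.
case h1: (view _ _ _ _ _ _ _ == v); case h2: (view _ _ _ _ _ _ _ == v); rewrite ?mulr0 ?mul0r ?mulr_ge0 ?ler0n //.
have [-> ->] := core sE iE nik ik (eqP h1) (eqP h2).
by rewrite eqxx.
Qed.


Theorem mainTheorem3 (R : realFieldType) (n : nat) (M Rnd B : finType)
  (E : rel 'I_n) (act : actT n M Rnd B) (out : outT n M Rnd B) (T : nat)
  (rho : 'I_n -> Rnd -> R) :
  (2 < n)%N -> (1 < #|M|)%N ->
  symmetric E -> irreflexive E ->
  is_distr rho ->
  transmits E act out T rho ->
  sender_anonymous E act T rho ->
  forall i : 'I_n, (2 <= degree E i)%N.
Proof.
move=> n2 M1 sE iE hd htr han i.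
rewrite leqNgt; apply/negP => hdeg.
have [k hk] : exists k, k \in ~: (i |: [set j | E i j]).
  apply/card_gt0P.
  have := cardsC (i |: [set j | E i j]); rewrite card_ord cardsU1 => h.
  rewrite /degree in hdeg; move: hdeg h n2.
  case: (i \in [set j | E i j]) => /=; lia.
move: hk; rewrite !inE negb_or => /andP [ki nik].
rewrite eq_sym in ki.
set A := ~: [set i; k].
have cA : #|A| = (n - 2)%N.
  have := cardsC [set i; k]; rewrite card_ord cards2 ki -/A; lia.
have [a0 a0A] : exists a0, a0 \in A by apply/card_gt0P; rewrite cA; lia.
have [a0i a0k] : a0 != i /\ a0 != k.
  by move: a0A; rewrite !inE negb_or => /andP [].
have [m [m' [_ _ mm']]] := card_gt1P M1.
pose Q := Qd E act T rho A.
pose mmc (mu : M) := fun j : 'I_n => if (j == i) || (j == k) then Some mu else None.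
pose n00 := fun _ : 'I_n => @None M.
pose L (inp : 'I_n -> option M) :=
  [seq view E act T A inp p.1 p.2 | p <- enum {: keys n * {ffun 'I_n -> Rnd}}].
pose Vs := undup (L (input i m) ++ L (input k m) ++ L (mmc m) ++ L n00 ++
                  L (input i m') ++ L (input k m') ++ L (mmc m')).
have LV : forall inp K rs, view E act T A inp K rs \in L inp.
  move=> inp K rs; apply: (map_f (fun p : keys n * {ffun 'I_n -> Rnd} => view E act T A inp p.1 p.2) (x := (K, rs))).
  by rewrite mem_enum.
have massQ : forall inp, {subset L inp <= Vs} -> forall h : viewT n Rnd B -> R,
    \sum_(v <- Vs) Q inp v * h v =
    \sum_(K : keys n) \sum_(rs : {ffun 'I_n -> Rnd}) weight rho K rs * h (view E act T A inp K rs).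
  move=> inp sub h; apply: mass; first exact: undup_uniq.
  by move=> K rs; apply: sub; apply: LV.
have sum1 : forall inp, {subset L inp <= Vs} -> \sum_(v <- Vs) Q inp v = 1.
  move=> inp sub; have := massQ inp sub (fun _ => 1).
  under eq_bigr => v _ do rewrite mulr1.
  move=> ->; under eq_bigr => K _ do under eq_bigr => rs _ do rewrite mulr1.
  exact: weight_total.
have Q0 : forall inp v, 0 <= Q inp v.
  move=> inp v; apply: sumr_ge0 => K _; apply: sumr_ge0 => rs _.
  by rewrite mulr_ge0 ?ler0n // weight_ge0.
have sub : forall inp, {subset L inp <= L inp} -> True by [].
have s1 : {subset L (input i m) <= Vs} by move=> x hx; rewrite mem_undup !mem_cat hx.
have s2 : {subset L (input k m) <= Vs} by move=> x hx; rewrite mem_undup !mem_cat hx ?orbT.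
have s3 : {subset L (mmc m) <= Vs} by move=> x hx; rewrite mem_undup !mem_cat hx ?orbT.
have s4 : {subset L n00 <= Vs} by move=> x hx; rewrite mem_undup !mem_cat hx ?orbT.
have s5 : {subset L (input i m') <= Vs} by move=> x hx; rewrite mem_undup !mem_cat hx ?orbT.
have s6 : {subset L (input k m') <= Vs} by move=> x hx; rewrite mem_undup !mem_cat hx ?orbT.
have s7 : {subset L (mmc m') <= Vs} by move=> x hx; rewrite mem_undup !mem_cat hx ?orbT.
have anon : forall mu, {subset L (input i mu) <= Vs} -> {subset L (input k mu) <= Vs} ->
    forall v, v \in Vs -> Q (input i mu) v = Q (input k mu) v.
  move=> mu sa sb.
  have [hle _] := han A mu (eq_leq cA).
  pose g v := if Q (input k mu) v <= Q (input i mu) v then i else k.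
  have := hle g; rewrite /guess_prob /A setCK.
  have ik : i \notin [set k] by rewrite in_set1.
  rewrite big_setU1 //= big_set1 -mulrDr -[X in _ <= X]mulr1 ler_pM2l; last first.
    by rewrite invr_gt0 ltr0n cards2 ki.
  have Xi := massQ _ sa (fun v => (g v == i)%:R); simpl in Xi.
  have Xk := massQ _ sb (fun v => (g v == k)%:R); simpl in Xk.
  rewrite -Xi -Xk -big_split /= => hs.
  apply: (le_sum_eq (sum1 _ sa) (sum1 _ sb) hs) => v; rewrite /g; case: ifP => h.
  - by rewrite eqxx (negbTE ki) mulr1 mulr0 addr0.
  - rewrite !eqxx eq_sym (negbTE ki) mulr1 mulr0 add0r; move/negbT: h; rewrite -ltNge => /ltW //.
  - by rewrite eqxx (negbTE ki) mulr1 mulr0 addr0.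
  - by rewrite eqxx eq_sym (negbTE ki) mulr1 mulr0 add0r.
have eq00 : forall mu, {subset L (input i mu) <= Vs} -> {subset L (input k mu) <= Vs} ->
    {subset L (mmc mu) <= Vs} -> forall v, v \in Vs -> Q (input i mu) v = Q n00 v.
  move=> mu sa sb sc.
  apply: (amgm (Q0 _) (Q0 _) (Q0 _) (sum1 _ sa) (sum1 _ sc) (sum1 _ s4)).
  move=> v vV; rewrite {2}(anon mu sa sb v vV).
  exact: swap_le.
have [v vV vpos] : exists2 v, v \in Vs & 0 < Q (input i m) v.
  by apply: seq_pos_ex; rewrite (sum1 _ s1) ltr01.
have vpos' : 0 < Q (input i m') v by rewrite (eq00 m' s5 s6 s7 v vV) -(eq00 m s1 s2 s3 v vV).
have ext : forall mu, 0 < Q (input i mu) v -> exists K rs,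
    0 < weight rho K rs /\ view E act T A (input i mu) K rs = v.
  move=> mu /sum_pos_ex [K /sum_pos_ex [rs]].
  case e: (view E act T A (input i mu) K rs == v); rewrite ?mulr0 ?ltxx // mulr1 => hw.
  by exists K, rs; split => //; apply/eqP.
have [K [rs [w1 e1]]] := ext m vpos.
have [K' [rs' [w2 e2]]] := ext m' vpos'.
have o1 := htr i m K rs (weight_pos hd w1) a0.
have o2 := htr i m' K' rs' (weight_pos hd w2) a0.
have in1 : forall mu, input i mu a0 = None by move=> mu; rewrite /input (negbTE a0i).
rewrite in1 in o1; rewrite in1 in o2.
rewrite -e2 in e1; case: e1 => et er ek.
have ra : rs a0 = rs' a0.
  have := congr1 (fun f : {ffun 'I_n -> option Rnd} => f a0) er; rewrite !ffunE a0A.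
  by case.
have ka : key_vec E K a0 = key_vec E K' a0.
  have := congr1 (fun f : {ffun 'I_n -> option {ffun 'I_n -> bool}} => f a0) ek; rewrite !ffunE a0A.
  by case.
rewrite et ra ka o2 in o1.
by rewrite o1 eqxx in mm'.
Qed.
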